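(* Consider a single-item auction setting with a feature space $\mathcal{Z}$, $n$ buyers each with unit demand and a single seller with supply $\lambda > 0$ and cost $c = 0$. Conditioned on each feature vector $z$, the buyers' bids $b_1,\dots,b_n$ are independent with $b_i \sim F_i^z$. For a pricing policy $p:\mathcal{Z}\to\mathbb{R}$ the clearing loss is $$\ell^c(p,z,\mathbf{b},c) = \sum_{i=1}^n \max\{b_i - p(z),0\} + \lambda \max\{p(z)-c,0\}.$$ Let $p$ be the pricing policy minimizing the expected clearing loss (i.e., for each $z$, $p(z)$ solves $\sum_{i=1}^n (1-F_i^z(p(z))) = \lambda$). Then the expected match rate under $p$ is at least $1-e^{-\lambda}$, where the match rate at price $p$ on a data point is ${\sf MR}(p) = \mathbf{1}[b^{(1)} \ge \max\{p,c\}]$ with $b^{(1)} = \max_i b_i$ the highest bid.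
   Context: $\mathbf{1}[\cdot]$ is the indicator function. The match rate is the indicator that the item is sold in a second-price auction with reserve price $\max\{p,c\}$. *)

(* Defs.v *)
From HB Require Import structures.
From mathcomp Require Import all_boot all_order all_algebra.
From mathcomp Require Import all_classical all_reals all_analysis.
Set Implicit Arguments. Unset Strict Implicit. Unset Printing Implicit Defensive.
Import Order.TTheory GRing.Theory Num.Theory.
Local Open Scope classical_set_scope.
Local Open Scope ring_scope.

Definition mutually_independent_rv {d} (Omega : measurableType d)
  (R : realType) (P : probability Omega R) (n : nat) (b : 'I_n -> Omega -> R) :=
  forall (S : {set 'I_n}) (A : 'I_n -> set R),
    (forall i, measurable (A i)) ->
    P (\bigcap_(i in [set i | i \in S]) (b i @^-1` A i)) =
    (\prod_(i in S) P (b i @^-1` A i))%E.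

(* Match rate indicator event at price pr with seller cost c:
   the highest bid is at least max{pr, c}, i.e. some bid is at least max{pr,c}. *)
Definition match_event {d} (Omega : measurableType d) (R : realType) (n : nat)
  (b : 'I_n -> Omega -> R) (pr c : R) : set Omega :=
  [set w | exists i : 'I_n, Num.max pr c <= b i w].

(* Main.v *)
Require Import Defs.
From HB Require Import structures.
From mathcomp Require Import all_boot all_order all_algebra.
From mathcomp Require Import all_classical all_reals all_analysis.
Import Order.TTheory GRing.Theory Num.Theory.
Local Open Scope classical_set_scope.
Local Open Scope ring_scope.

Lemma int_lb (R : realType) (d : measure_display) (T : measurableType d)
  (mu : probability T R) (f : T -> \bar R) (c : R) :
  0 <= c -> (forall x, (c%:E <= f x)%E) -> (c%:E <= \int[mu]_x f x)%E.
Proof.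
move=> c0 hf.
have f0 : forall x, (0 <= f x)%E by move=> x; exact: le_trans (hf x).
have := integral_cst mu measurableT c%:E.
move=> H.
have H2 : (\int[mu]_x cst c%:E x = c%:E)%E.
  by rewrite H -[RHS]mule1; congr (_ * _)%E; exact: probability_setT.
rewrite -H2.
rewrite (ge0_integralTE mu f0) ge0_integralTE; last by move=> x; rewrite lee_fin.
apply: ereal_sup_le => _ [h hle <-]; exists h => //= x.
exact: le_trans (hle x) (hf x).
Qed.

Theorem mainTheorem2 (R : realType)
  (dZ : measure_display) (Z : measurableType dZ) (PZ : probability Z R)
  (dO : measure_display) (Omega : measurableType dO) (Q : Z -> probability Omega R)
  (n : nat) (b : 'I_n -> Omega -> R) (F : 'I_n -> Z -> R -> R)
  (lambda : R) (p : Z -> R) :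
  0 < lambda ->
  (forall i, measurable_fun setT (b i)) ->
  (forall i w, 0 <= b i w) ->
  (forall z, mutually_independent_rv (Q z) b) ->
  (forall i z x, Q z [set w | b i w <= x] = (F i z x)%:E) ->
  (forall z, \sum_(i < n) (1 - F i z (p z)) = lambda) ->
  ((1 - expR (- lambda))%:E <= \int[PZ]_z Q z (match_event b (p z) 0))%E.
Proof.
move=> lam0 mb b0 ind hF hsum.
have mpre : forall i (Y : set R), measurable Y -> measurable (b i @^-1` Y).
  by move=> i Y mY; have := mb i measurableT Y mY; rewrite setTI.
apply: int_lb.
  by rewrite subr_ge0 expR_le1 oppr_le0 ltW.
move=> z.
set m := Num.max (p z) 0.
pose A : 'I_n -> set R := fun _ => `]-oo, m[%classic.
have mA : forall i, measurable (A i) by move=> i; exact: measurable_itv.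
set C := \bigcap_(i in [set i | i \in [set: 'I_n]%SET]) b i @^-1` A i.
have mC : measurable C.
  apply: fin_bigcap_measurable; first exact: finite_finset.
  by move=> i _; exact: mpre.
have hM : match_event b (p z) 0 = ~` C.
  apply/seteqP; split => w.
    move=> [i hi] hC.
    have hi' : [set i | i \in [set: 'I_n]%SET] i by rewrite /= inE.
    have := hC i hi'.
    by rewrite /A /= in_itv /= ltNge hi.
  move=> hnC; apply: contrapT => hne; apply: hnC => i _.
  rewrite /A /= in_itv /= ltNge; apply/negP => hi; apply: hne; by exists i.
rewrite hM probability_setC // (ind z [set: 'I_n]%SET A mA).
pose q i := fine (Q z (b i @^-1` A i)).
have hq : forall i, Q z (b i @^-1` A i) = (q i)%:E.
  by move=> i; rewrite /q fineK // fin_num_measure //; exact: mpre.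
have mle : forall i x, measurable [set w | b i w <= x].
  move=> i x; have -> : [set w | b i w <= x] = b i @^-1` `]-oo, x]%classic.
    by apply/seteqP; split => w /=; rewrite in_itv.
  by apply: mpre; exact: measurable_itv.
have hqF : forall i, 0 <= q i <= F i z (p z).
  move=> i; rewrite -!lee_fin -hq -hF measure_ge0 /=.
  apply: le_measure; rewrite ?inE; [exact: mpre|exact: mle|].
  move=> w; rewrite /A /= in_itv /= => hw.
  apply: ltW; move: hw; rewrite /m.
  have := b0 i w; rewrite /Num.max; case: ifP => // _ h1 h2.
  by have := lt_le_trans h2 h1; rewrite ltxx.
have hF1 : forall i, F i z (p z) <= 1.
  by move=> i; rewrite -lee_fin -hF probability_le1.
under eq_bigr do rewrite hq.
rewrite prodEFin -EFinB lee_fin lerD2l lerN2.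
apply: (le_trans (y := \prod_(i in [set: 'I_n]%SET) expR (F i z (p z) - 1))).
  apply: ler_prod => i _; have /andP[q0 qF] := hqF i.
  rewrite q0 /=; apply: le_trans qF _.
  by have := expR_ge1Dx (F i z (p z) - 1); rewrite addrC subrK.
rewrite -expR_sum -(hsum z) -sumrN.
rewrite (eq_bigl (fun i => true)); last by move=> i; rewrite inE.
rewrite le_eqVlt; apply/orP; left; apply/eqP; congr expR.
by apply: eq_bigr => i _; rewrite opprB.
Qed.
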